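(* Let $n\ge 2$, let $A_1,\dots,A_n$ be pairwise distinct points in the plane and let $\Gamma$ be a circle with centre $O$. Suppose that for every $r>0$ the quantity $\sum_{i=1}^n|PA_i|^{2n-2}$ is constant as $P$ ranges over the circle $\Gamma_r$ of radius $r$ centred at $O$ (the constant may depend on $r$). Then $A_1,\dots,A_n$ are the vertices of a regular $n$-gon inscribed in a circle centred at $O$.
   Context: $|PA|$ denotes Euclidean distance. For $n=2$ a ''regular $2$-gon inscribed in a circle centred at $O$'' means two distinct points symmetric with respect to $O$. *)

(* Defs.v *)
From Stdlib Require Import Reals Lra.
Open Scope R_scope.

Definition point := (R * R)%type.

Definition pdist (P Q : point) : R :=
  sqrt ((fst P - fst Q) ^ 2 + (snd P - snd Q) ^ 2).

Fixpoint sumR (n : nat) (f : nat -> R) : R :=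
  match n with
  | O => 0
  | S m => sumR m f + f m
  end.

Definition ngon_vertex (n : nat) (O : point) (rho theta : R) (k : nat) : point :=
  (fst O + rho * cos (theta + 2 * PI * INR k / INR n),
   snd O + rho * sin (theta + 2 * PI * INR k / INR n)).

Definition is_regular_ngon_centred (n : nat) (A : nat -> point) (O : point) : Prop :=
  exists (rho theta : R) (sigma : nat -> nat),
    0 < rho /\
    (forall k, (k < n)%nat -> (sigma k < n)%nat) /\
    (forall k l, (k < n)%nat -> (l < n)%nat -> sigma k = sigma l -> k = l) /\
    (forall k, (k < n)%nat -> A (sigma k) = ngon_vertex n O rho theta k).

(* Main.v *)
Require Import Defs.
From Stdlib Require Import Reals.
From Stdlib Require Import Lra Lia Psatz.
Open Scope R_scope.

Module S1M.

Definition ux (j : nat) : R := (1 - INR j * INR j) / (1 + INR j * INR j).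
Definition uy (j : nat) : R := 2 * INR j / (1 + INR j * INR j).

Lemma moeb_unit j : ux j * ux j + uy j * uy j = 1.
Proof.
  unfold ux, uy. assert (H : 0 <= INR j) by apply pos_INR.
  field. nra.
Qed.

Lemma ux_inj j l : ux j = ux l -> j = l.
Proof.
  unfold ux; intro E.
  assert (Hj : 0 <= INR j) by apply pos_INR.
  assert (Hl : 0 <= INR l) by apply pos_INR.
  assert (E2 : (1 - INR j * INR j) * (1 + INR l * INR l) = (1 - INR l * INR l) * (1 + INR j * INR j)).
  { replace (1 - INR j * INR j) with ((1 - INR j * INR j) / (1 + INR j * INR j) * (1 + INR j * INR j)) by (field; nra).
    rewrite E. field. nra. }
  assert (E3 : INR j = INR l) by nra.
  apply INR_eq; exact E3.
Qed.

Lemma pdist_circle (O : point) (r u1 u2 : R) : 0 < r -> u1 * u1 + u2 * u2 = 1 ->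
  pdist (fst O + r * u1, snd O + r * u2) O = r.
Proof.
  intros Hr Hu. unfold pdist; cbn [fst snd].
  replace ((fst O + r * u1 - fst O) ^ 2 + (snd O + r * u2 - snd O) ^ 2) with (r * r).
  - apply sqrt_square; lra.
  - replace (r * r) with (r * r * (u1 * u1 + u2 * u2)) by (rewrite Hu; ring). ring.
Qed.

Lemma pdist_pow (P Q : point) (n : nat) :
  pdist P Q ^ (2 * n - 2) = ((fst P - fst Q) ^ 2 + (snd P - snd Q) ^ 2) ^ (n - 1).
Proof.
  unfold pdist. replace (2 * n - 2)%nat with (2 * (n - 1))%nat by lia.
  rewrite pow_mult. rewrite pow2_sqrt; [reflexivity|].
  apply Rplus_le_le_0_compat; apply pow2_ge_0.
Qed.

Lemma polar (x y : R) : ~ (x = 0 /\ y = 0) ->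
  exists th, x = sqrt (x * x + y * y) * cos th /\ y = sqrt (x * x + y * y) * sin th.
Proof.
  intro H.
  set (rho := sqrt (x * x + y * y)).
  assert (Hpos : 0 < x * x + y * y).
  { destruct (Req_dec x 0) as [Hx|Hx].
    - assert (y <> 0) by tauto. nra.
    - nra. }
  assert (Hr : 0 < rho) by (apply sqrt_lt_R0; exact Hpos).
  assert (Hr2 : rho * rho = x * x + y * y) by (apply sqrt_sqrt; lra).
  assert (Hb : -1 <= x / rho <= 1).
  { assert (Hxx : x * x <= rho * rho) by nra.
    split.
    - apply (Rmult_le_reg_r rho); auto. unfold Rdiv; rewrite Rmult_assoc, Rinv_l by lra. nra.
    - apply (Rmult_le_reg_r rho); auto. unfold Rdiv; rewrite Rmult_assoc, Rinv_l by lra. nra. }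
  assert (Hs : sqrt (1 - (x / rho)²) = Rabs y / rho).
  { assert (E : 1 - (x / rho)² = (Rabs y / rho)²).
    { unfold Rsqr.
      assert (Ry : Rabs y * Rabs y = y * y) by (rewrite <- Rabs_mult; apply Rabs_right; nra).
      replace (Rabs y / rho * (Rabs y / rho)) with (y * y / (rho * rho)) by (rewrite <- Ry; field; lra).
      replace (x / rho * (x / rho)) with (x * x / (rho * rho)) by (field; lra).
      rewrite Hr2. field. lra. }
    rewrite E. apply sqrt_Rsqr. apply Rle_mult_inv_pos; [apply Rabs_pos | lra]. }
  destruct (Rle_dec 0 y) as [Hy|Hy].
  - exists (acos (x / rho)). rewrite cos_acos by exact Hb. rewrite sin_acos by exact Hb.
    rewrite Hs, Rabs_right by lra. fold rho. split; field; lra.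
  - exists (- acos (x / rho)). rewrite cos_neg, sin_neg, cos_acos by exact Hb. rewrite sin_acos by exact Hb.
    rewrite Hs, Rabs_left by lra. fold rho. split; field; lra.
Qed.

Lemma angle_inj (n k l : nat) : (0 < n)%nat -> (k < n)%nat -> (l < n)%nat ->
  cos (2 * PI * INR k / INR n - 2 * PI * INR l / INR n) = 1 ->
  sin (2 * PI * INR k / INR n - 2 * PI * INR l / INR n) = 0 -> k = l.
Proof.
  intros Hn Hk Hl Hc Hs.
  apply sin_eq_0_0 in Hs. destruct Hs as [z Hz].
  assert (HnR : 0 < INR n) by (apply lt_0_INR; exact Hn).
  assert (HkR : INR k < INR n) by (apply lt_INR; exact Hk).
  assert (HlR : INR l < INR n) by (apply lt_INR; exact Hl).
  assert (Hk0 : 0 <= INR k) by apply pos_INR.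
  assert (Hl0 : 0 <= INR l) by apply pos_INR.
  assert (HPI : 0 < PI) by apply PI_RGT_0.
  set (x := 2 * PI * INR k / INR n - 2 * PI * INR l / INR n) in *.
  assert (Hx : x = 2 * PI * ((INR k - INR l) / INR n)) by (unfold x; field; lra).
  assert (Hq1 : (INR k - INR l) / INR n < 1).
  { apply (Rmult_lt_reg_r (INR n)); auto. unfold Rdiv; rewrite Rmult_assoc, Rinv_l by lra. lra. }
  assert (Hq2 : -1 < (INR k - INR l) / INR n).
  { apply (Rmult_lt_reg_r (INR n)); auto. unfold Rdiv; rewrite Rmult_assoc, Rinv_l by lra. lra. }
  assert (Hz1 : IZR z < 2).
  { apply (Rmult_lt_reg_r PI); auto. rewrite <- Hz, Hx. nra. }
  assert (Hz2 : -2 < IZR z).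
  { apply (Rmult_lt_reg_r PI); auto. rewrite <- Hz, Hx. nra. }
  apply lt_IZR in Hz1. apply lt_IZR in Hz2.
  assert (Hz3 : z = (-1)%Z \/ z = 0%Z \/ z = 1%Z) by lia.
  destruct Hz3 as [E|[E|E]]; subst z.
  - rewrite Hz in Hc. replace (IZR (-1) * PI) with (- PI) in Hc by (simpl; ring).
    rewrite cos_neg, cos_PI in Hc. lra.
  - assert (E : INR k = INR l).
    { assert (Hq : (INR k - INR l) / INR n = 0).
      { apply (Rmult_eq_reg_l (2 * PI)); [|lra]. rewrite <- Hx, Hz. simpl. ring. }
      apply (Rmult_eq_compat_r (INR n)) in Hq. unfold Rdiv in Hq.
      rewrite Rmult_assoc, Rinv_l, Rmult_0_l in Hq by lra. lra. }
    apply INR_eq; exact E.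
  - rewrite Hz in Hc. replace (IZR 1 * PI) with PI in Hc by (simpl; ring).
    rewrite cos_PI in Hc. lra.
Qed.

Lemma sumR_ext (n : nat) (f g : nat -> R) : (forall i, f i = g i) -> sumR n f = sumR n g.
Proof. intro H; induction n as [|n IH]; simpl; [reflexivity|]. rewrite IH, H; reflexivity. Qed.

Lemma sqrt_pos_k (k : nat) : 0 < sqrt (INR k + 1).
Proof. apply sqrt_lt_R0. apply Rplus_le_lt_0_compat; [apply pos_INR | apply Rlt_0_1]. Qed.

Lemma nsub1 (n : nat) : Nat.sub n 1 = Nat.pred n.
Proof. lia. Qed.

Definition phi (n k : nat) : R := 2 * PI * INR k / INR n.

Lemma rot_cos (rho th ph : R) :
  rho * cos (th + ph) = rho * cos th * cos ph - rho * sin th * sin ph.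
Proof. rewrite cos_plus. ring. Qed.

Lemma rot_sin (rho th ph : R) :
  rho * sin (th + ph) = rho * cos th * sin ph + rho * sin th * cos ph.
Proof. rewrite sin_plus. ring. Qed.

Lemma full_turn (n k : nat) : (0 < n)%nat ->
  cos (INR n * phi n k) = 1 /\ sin (INR n * phi n k) = 0.
Proof.
  intro Hn. assert (HnR : 0 < INR n) by (apply lt_0_INR; exact Hn).
  replace (INR n * phi n k) with (0 + 2 * INR k * PI) by (unfold phi; field; lra).
  rewrite cos_period, sin_period, cos_0, sin_0. split; reflexivity.
Qed.

Lemma diff_angle (a b : R) : cos a = cos b -> sin a = sin b ->
  cos (a - b) = 1 /\ sin (a - b) = 0.
Proof.
  intros Hc Hs. unfold Rminus. rewrite cos_plus, sin_plus, cos_neg, sin_neg.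
  rewrite Hc, Hs. split.
  - pose proof (sin2_cos2 b) as E. unfold Rsqr in E. lra.
  - ring.
Qed.

Lemma pair_from_diff (p O : point) (u v : R) :
  fst p - fst O = u -> snd p - snd O = v -> p = (fst O + u, snd O + v).
Proof. destruct p as [x y]. simpl. intros H1 H2. f_equal; lra. Qed.

Lemma pair_eq_diff (p q O : point) :
  fst p - fst O = fst q - fst O -> snd p - snd O = snd q - snd O -> p = q.
Proof. destruct p as [x y], q as [x' y']. simpl. intros H1 H2. f_equal; lra. Qed.

Lemma pos_sqrt_sum (x y : R) : ~ (x = 0 /\ y = 0) -> 0 < sqrt (x * x + y * y).
Proof.
  intro H. apply sqrt_lt_R0.
  destruct (Req_dec x 0) as [Hx|Hx].
  - assert (y <> 0) by tauto. nra.
  - nra.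
Qed.

End S1M.

Module Alg.
From mathcomp Require Import all_boot all_order all_algebra.
From mathcomp Require Import ring lra.
From mathcomp Require Import Rstruct complex.
Import S1M.
Local Set Implicit Arguments. Local Unset Strict Implicit. Local Unset Printing Implicit Defensive.
Import Order.TTheory GRing.Theory Num.Theory.
Local Open Scope ring_scope.

Lemma poly0_inj (F : idomainType) (p : {poly F}) (f : nat -> F) :
  injective f -> (forall k, p.[f k] = 0) -> p = 0.
Proof.
move=> fi pf; apply: (@roots_geq_poly_eq0 _ p (mkseq f (size p))).
- by apply/allP => x /seq.mapP [k _ ->]; rewrite /root pf.
- by rewrite map_inj_uniq ?iota_uniq.
- by rewrite size_mkseq.
Qed.

Lemma coef_XsubC_exp (F : comNzRingType) (a : F) m j : (j <= m)%N ->
  (('X - a%:P) ^+ m)`_j = (- a) ^+ (m - j) *+ 'C(m, j).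
Proof.
move=> jm; rewrite addrC exprDn coef_sum.
have jm1 : (j < m.+1)%N by [].
rewrite (bigD1 (Ordinal jm1)) //= big1 ?addr0.
  by rewrite coefMn -polyCN -polyC_exp coefCM coefXn eqxx mulr1.
move=> i /eqP ne; rewrite coefMn -polyCN -polyC_exp coefCM coefXn.
case: eqP => [e|]; last by rewrite mulr0 mul0rn.
by exfalso; apply: ne; apply: val_inj => /=.
Qed.


Section PartD.
Variable F : numFieldType.
Variable n : nat.
Variable a : nat -> F.
Hypothesis n2 : (1 < n)%N.
Hypothesis ainj : forall i j, (i < n)%N -> (j < n)%N -> a i = a j -> i = j.
Hypothesis psum : forall k, (0 < k < n)%N -> \sum_(i < n) a i ^+ k = 0.

Lemma sum_eval (f : {poly F}) : (size f <= n)%N ->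
  \sum_(i < n) f.[a i] = f`_0 *+ n.
Proof.
move=> sf.
under eq_bigr => i _ do rewrite (horner_coef_wide _ sf).
rewrite exchange_big /=.
have n0 : (0 < n)%N by apply: ltn_trans n2.
case: n n2 sf psum => // n' _ _ ps.
rewrite big_ord_recl /= [X in _ + X]big1 ?addr0.
  rewrite -mulr_sumr.
  under eq_bigr => i _ do rewrite expr0.
  by rewrite sumr_const card_ord mulr_natr.
move=> k _; rewrite -mulr_sumr ps ?mulr0 //.
by rewrite /bump /= add1n ltnS ltn_ord.
Qed.

Definition Q := \prod_(i < n) ('X - (a i)%:P).
Definition fj (j : 'I_n) := \prod_(i < n | i != j) ('X - (a i)%:P).

Lemma Q_split (j : 'I_n) : Q = ('X - (a j)%:P) * fj j.
Proof. by rewrite /Q (bigD1 j). Qed.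

Lemma size_Q : size Q = n.+1.
Proof. by rewrite /Q -(big_mkord xpredT (fun i => 'X - (a i)%:P)) size_prod_XsubC /index_iota subn0 size_iota. Qed.

Lemma size_fj j : (size (fj j) <= n)%N.
Proof.
have := size_Q; rewrite (Q_split j) size_Mmonic ?monic_neq0 ?monicXsubC ?size_XsubC //.
  by rewrite add2n /= => [[->]].
exact: monic_prod_XsubC.
Qed.

Lemma fj_other (j i : 'I_n) : i != j -> (fj j).[a i] = 0.
Proof.
move=> ij; rewrite /fj horner_prod; apply/eqP/prodf_eq0.
by exists i => //; rewrite hornerXsubC subrr eqxx.
Qed.

Lemma fj_self (j : 'I_n) : (fj j).[a j] != 0.
Proof.
rewrite /fj horner_prod prodf_seq_neq0; apply/allP => i _.
apply/implyP => ij; rewrite hornerXsubC subr_eq0; apply/eqP => e.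
apply: (negP ij); apply/eqP; apply: val_inj; symmetry; exact: (ainj (ltn_ord j) (ltn_ord i) e).
Qed.

Lemma fj_key (j : 'I_n) : (fj j).[a j] = (fj j)`_0 *+ n.
Proof.
rewrite -sum_eval ?size_fj // (bigD1 j) //= big1 ?addr0 //.
by move=> i ij; rewrite fj_other.
Qed.

Lemma fj0 (j : 'I_n) : (fj j)`_0 = \prod_(i < n | i != j) (- a i).
Proof.
by rewrite -horner_coef0 /fj horner_prod; apply: eq_bigr => i _; rewrite hornerXsubC sub0r.
Qed.

Lemma Q0 (j : 'I_n) : Q`_0 = (- a j) * (fj j)`_0.
Proof.
rewrite fj0 -horner_coef0 /Q horner_prod (bigD1 j) //=.
by rewrite hornerXsubC sub0r; congr (_ * _); apply: eq_bigr => i _; rewrite hornerXsubC sub0r.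
Qed.

Definition T := Q^`() * 'X - Q *+ n + (Q`_0 *+ n)%:P.

Lemma T_root (j : 'I_n) : T.[a j] = 0.
Proof.
have QD : Q^`().[a j] = (fj j).[a j].
  rewrite (Q_split j) derivM derivXsubC mul1r hornerD hornerM hornerXsubC subrr mul0r addr0 //.
have Qr : Q.[a j] = 0 by rewrite (Q_split j) hornerM hornerXsubC subrr mul0r.
rewrite /T hornerD hornerC hornerD hornerN hornerMn hornerMX QD Qr fj_key (Q0 j).
move: ((fj j)`_0) (a j) => c x.
by rewrite mul0rn subr0 mulrnAl -mulrnDl mulNr [c * x]mulrC addrN mul0rn.
Qed.

Lemma T_size : (size T <= n)%N.
Proof.
apply/leq_sizeP => k kn.
have k0 : k != 0%N by rewrite -lt0n; apply: leq_trans kn; apply: ltnW.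
rewrite /T coefD coefB coefMX coefC (negbTE k0) addr0 coef_deriv coefMn.
rewrite prednK ?lt0n //.
case: (ltngtP k n) kn => // [nk|<-] _.
  by rewrite nth_default ?mul0rn ?subrr // size_Q.
by rewrite subrr.
Qed.

Lemma T0 : T = 0.
Proof.
apply: (@roots_geq_poly_eq0 _ T [seq a i | i <- iota 0 n]).
- apply/allP => x /seq.mapP; case=> i; rewrite mem_iota add0n => /andP [_ lin] ->.
  by rewrite /root (T_root (Ordinal lin)).
- rewrite map_inj_in_uniq ?iota_uniq // => x y.
  rewrite !mem_iota !add0n => /andP[_ xn] /andP [_ yn]; exact: ainj.
- by rewrite size_map size_iota T_size.
Qed.

Lemma Q_mid k : (0 < k < n)%N -> Q`_k = 0.
Proof.
case/andP => k0 kn.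
have := congr1 (fun p : {poly F} => p`_k) T0.
rewrite /T coefD coefB coefMX coefC eqn0Ngt k0 /= addr0 coef_deriv coefMn prednK //.
rewrite coef0 -mulr_natr -[Q`_k *+ n]mulr_natr -mulrBr => /eqP.
rewrite mulf_eq0 subr_eq0 eqr_nat => /orP [/eqP //|/eqP e].
by rewrite e ltnn in kn.
Qed.

Lemma a_pow (j : nat) : (j < n)%N -> a j ^+ n = - Q`_0.
Proof.
move=> jn.
have n0 : (0 < n)%N by apply: ltn_trans n2.
have : Q.[a j] = 0 by rewrite (Q_split (Ordinal jn)) hornerM hornerXsubC subrr mul0r.
rewrite (@horner_coef_wide _ n.+1 Q (a j) (eq_leq size_Q)) big_ord_recr /=.
rewrite (bigD1 (Ordinal n0)) //= big1.
  have : lead_coef Q = 1 by rewrite /Q lead_coef_prod_XsubC.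
  rewrite lead_coefE size_Q /= => ->.
  by rewrite expr0 mulr1 addr0 mul1r => /eqP; rewrite addrC addr_eq0 => /eqP.
move=> i ni; rewrite Q_mid ?mul0r //=.
rewrite ltn_ord andbT lt0n; apply: contra ni => /eqP e.
by apply/eqP; apply: val_inj.
Qed.

Lemma a0_neq0 : a 0 != 0.
Proof.
apply/eqP => a00.
have n1 : (1 < n)%N by [].
pose j := Ordinal n1.
have := fj_self j; rewrite fj_key fj0.
have z : \prod_(i < n | i != j) (- a i) = 0.
  apply/eqP/prodf_eq0.
  have n0 : (0 < n)%N by apply: ltn_trans n2.
  exists (Ordinal n0); last by rewrite /= a00 oppr0 eqxx.
  by apply/eqP => /(congr1 val).
by rewrite z mul0rn eqxx.
Qed.

End PartD.


Section PartC.
Variable C : numFieldType.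
Variables n m : nat.
Variables a b : nat -> C.
Variables fu fuc rr : nat -> C.
Hypothesis fu_inj : injective fu.
Hypothesis fu_unit : forall j, fu j * fuc j = 1.
Hypothesis rr2 : forall k, rr k ^+ 2 = k.+1%:R.

Definition L (s t : C) := \sum_(i < n) ((s - a i) * (t - b i)) ^+ m.

Hypothesis Hc : forall k, exists K, forall j, L (rr k * fu j) (rr k * fuc j) = K.

Lemma rr_nz k : rr k != 0.
Proof. by apply/eqP => e; have := rr2 k; rewrite e expr0n /= => /eqP; rewrite eq_sym pnatr_eq0. Qed.

Definition P1 (r K : C) : {poly C} :=
  \sum_(i < n) ((r *: 'X - (a i)%:P) ^+ m * (r%:P - b i *: 'X) ^+ m) - K *: 'X^m.

Lemma P1_eval r K u v : u * v = 1 -> (P1 r K).[u] = u ^+ m * (L (r * u) (r * v) - K).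
Proof.
move=> uv; rewrite /P1 hornerD hornerN horner_sum hornerZ hornerXn /L mulrBr mulr_sumr.
congr (_ - _); last by rewrite mulrC.
apply: eq_bigr => i _.
rewrite hornerM !horner_exp hornerD hornerN hornerZ hornerX hornerC hornerD hornerN hornerZ hornerX hornerC.
have e : r - b i * u = u * (r * v - b i).
  by rewrite mulrBr mulrCA uv mulr1 mulrC.
by rewrite e exprMn exprMn mulrCA.
Qed.

Lemma C2 k : exists K, forall u, u != 0 -> L (rr k * u) (rr k * u^-1) = K.
Proof.
have [K HK] := Hc k; exists K; set r := rr k.
have P10 : P1 r K = 0.
  apply: (@poly0_inj _ _ fu fu_inj) => j.
  by rewrite (P1_eval _ _ (fu_unit j)) HK subrr mulr0.
move=> u u0; have := P1_eval r K (mulfV u0); rewrite P10 horner0 => /esym/eqP.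
by rewrite mulf_eq0 expf_eq0 (negbTE u0) andbF /= subr_eq0 => /eqP.
Qed.

Definition P2 (s : C) : {poly C} :=
  \sum_(i < n) ((s - a i) ^+ m) *: ('X - (s * b i)%:P) ^+ m
  - s ^+ m *: \sum_(i < n) ((1 - a i) ^+ m) *: ('X - (b i)%:P) ^+ m.

Lemma P2_eval s w : s != 0 -> (P2 s).[w] = s ^+ m * (L s (w / s) - L 1 w).
Proof.
move=> s0; rewrite /P2 hornerD hornerN hornerZ horner_sum horner_sum /L mulrBr.
congr (_ - _).
  rewrite mulr_sumr; apply: eq_bigr => i _; rewrite hornerZ horner_exp hornerD hornerN hornerX hornerC.
  have e : w - s * b i = s * (w / s - b i).
    by rewrite mulrBr mulrCA divff // mulr1.
  by rewrite e !exprMn mulrCA.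
congr (_ * _); apply: eq_bigr => i _.
by rewrite hornerZ horner_exp hornerD hornerN hornerX hornerC exprMn.
Qed.

Lemma C3 s : s != 0 -> \sum_(i < n) (s - a i) ^+ m = s ^+ m * \sum_(i < n) (1 - a i) ^+ m.
Proof.
move=> s0.
have P20 : P2 s = 0.
  have inj : injective (fun k : nat => k.+1%:R : C).
    by move=> x y /eqP; rewrite eqr_nat eqSS => /eqP.
  apply: (@poly0_inj _ _ _ inj) => k.
  pose r := rr k.
  have rn0 : r != 0 by apply: rr_nz.
  have [K HK] := C2 k.
  have e1 := HK (s / r); have e2 := HK (1 / r).
  rewrite mulf_neq0 ?invr_eq0 // in e1; rewrite mul1r invr_eq0 rn0 in e2.
  have := e1 isT; have := e2 isT.
  have -> : r * r^-1 = 1 by rewrite divff.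
  have -> : r * r^-1^-1 = r ^+ 2 by rewrite invrK expr2.
  have -> : r * (s / r) = s by rewrite mulrC -mulrA mulVf // mulr1.
  have -> : r * (s / r)^-1 = r ^+ 2 / s by rewrite invf_div expr2 mulrA.
  move=> h1 h2.
  by rewrite P2_eval // -(rr2 k) -/r h1 h2 subrr mulr0.
have := congr1 (fun p : {poly C} => p`_m) P20.
rewrite /P2 coefB coefZ !coef_sum coef0.
under eq_bigr => i _ do rewrite coefZ coef_XsubC_exp // subnn expr0 binn mulr1n mulr1.
under [X in _ * X]eq_bigr => i _ do rewrite coefZ coef_XsubC_exp // subnn expr0 binn mulr1n mulr1.
by move/eqP; rewrite subr_eq0 => /eqP.
Qed.

Lemma partC k : (0 < k <= m)%N -> \sum_(i < n) a i ^+ k = 0.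
Proof.
case/andP => k0 km.
pose kappa := \sum_(i < n) (1 - a i) ^+ m.
pose P3 : {poly C} := \sum_(i < n) ('X - (a i)%:P) ^+ m - kappa *: 'X^m.
have P30 : P3 = 0.
  have inj : injective (fun k : nat => k.+1%:R : C).
    by move=> x y /eqP; rewrite eqr_nat eqSS => /eqP.
  apply: (@poly0_inj _ _ _ inj) => j.
  rewrite /P3 hornerD hornerN hornerZ hornerXn horner_sum.
  under eq_bigr => i _ do rewrite horner_exp hornerD hornerN hornerX hornerC.
  by rewrite C3 ?pnatr_eq0 // mulrC subrr.
have := congr1 (fun p : {poly C} => p`_(m - k)) P30.
rewrite /P3 coefB coefZ coef_sum coefXn coef0.
have -> : (m - k == m)%N = false.
  by apply/negbTE; rewrite neq_ltn; apply/orP; left; rewrite ltn_subrL k0 /=; case: m km k0 => [|//]; case: k.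
rewrite mulr0 subr0.
under eq_bigr => i _ do rewrite coef_XsubC_exp ?leq_subr // subKn //.
rewrite sumrMnl => /eqP; rewrite mulrn_eq0 eqn0Ngt bin_gt0 leq_subr /=.
under eq_bigr => i _ do rewrite exprNn.
by rewrite -mulr_sumr mulf_eq0 signr_eq0 /= => /eqP.
Qed.

End PartC.


Lemma alg_main (C : numFieldType) (n : nat) (a b fu fuc rr : nat -> C) :
  (1 < n)%N ->
  (forall i j, (i < n)%N -> (j < n)%N -> a i = a j -> i = j) ->
  injective fu -> (forall j, fu j * fuc j = 1) -> (forall k, rr k ^+ 2 = k.+1%:R) ->
  (forall k, exists K, forall j, L n n.-1 a b (rr k * fu j) (rr k * fuc j) = K) ->
  a 0%N != 0 /\ forall j, (j < n)%N -> a j ^+ n = a 0%N ^+ n.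
Proof.
move=> n2 ainj finj fu1 rr2 Hc.
have ps : forall k, (0 < k < n)%N -> \sum_(i < n) a i ^+ k = 0.
  move=> k /andP [k0 kn]; apply: (partC finj fu1 rr2 Hc).
  by rewrite k0 /= -ltnS prednK // ltnW.
split; first exact: (a0_neq0 n2 ainj ps).
move=> j jn; rewrite (a_pow n2 ainj ps jn) (a_pow n2 ainj ps) //.
by apply: ltn_trans n2.
Qed.

Lemma roots_cover (F : idomainType) (n : nat) (a w : nat -> F) (c : F) :
  (0 < n)%N ->
  (forall i j, (i < n)%N -> (j < n)%N -> a i = a j -> i = j) ->
  (forall j, (j < n)%N -> a j ^+ n = c) ->
  (forall k, (k < n)%N -> w k ^+ n = c) ->
  forall k, (k < n)%N -> has (fun j => a j == w k) (iota 0 n).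
Proof.
move=> n0 ainj ac wc k kn; apply: contraT => hn.
have : 'X^n - c%:P = 0 :> {poly F}.
  apply: (@roots_geq_poly_eq0 _ _ (w k :: [seq a j | j <- iota 0 n])).
  - apply/allP => x; rewrite inE => /orP [/eqP ->|/seq.mapP [j]].
      by rewrite /root !hornerE wc // subrr.
    rewrite mem_iota add0n => /andP [_ jn] ->.
    by rewrite /root !hornerE ac // subrr.
  - rewrite /= map_inj_in_uniq ?iota_uniq ?andbT.
      apply/seq.mapP => [[j jin e]]; move/negP: hn; apply; apply/hasP; exists j => //.
      by rewrite e.
    move=> x y; rewrite !mem_iota !add0n => /andP[_ xn] /andP [_ yn]; exact: ainj.
  - by rewrite size_XnsubC //= size_map size_iota.
move/(congr1 (fun p : {poly F} => size p)); rewrite size_XnsubC // size_poly0.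
by [].
Qed.

Lemma sigma_exists (F : idomainType) (n : nat) (a w : nat -> F) :
  (forall i j, (i < n)%N -> (j < n)%N -> w i = w j -> i = j) ->
  (forall k, (k < n)%N -> has (fun j => a j == w k) (iota 0 n)) ->
  exists sigma : nat -> nat,
    (forall k, (k < n)%N -> (sigma k < n)%N) /\
    (forall k l, (k < n)%N -> (l < n)%N -> sigma k = sigma l -> k = l) /\
    (forall k, (k < n)%N -> a (sigma k) = w k).
Proof.
move=> winj hs.
exists (fun k => find (fun j => a j == w k) (iota 0 n)).
have P1 : forall k, (k < n)%N -> (find (fun j => a j == w k) (iota 0 n) < n)%N.
  by move=> k kn; rewrite -[X in (_ < X)%N](size_iota 0 n) -has_find hs.
have P3 : forall k, (k < n)%N -> a (find (fun j => a j == w k) (iota 0 n)) = w k.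
  move=> k kn; have := nth_find 0 (hs k kn).
  by rewrite nth_iota ?P1 // add0n => /eqP.
split => //; split => // k l kn ln e.
by apply: winj => //; rewrite -(P3 k kn) -(P3 l ln) e.
Qed.

Local Open Scope complex_scope.
Notation RR := Rdefinitions.R.
Notation CC := (Rdefinitions.R[i]).


Lemma cmul (x y u v : RR) : (Complex x y : CC) * Complex u v = Complex (x * u - y * v) (x * v + y * u).
Proof. by []. Qed.
Lemma csub (x y u v : RR) : (Complex x y : CC) - Complex u v = Complex (x - u) (y - v).
Proof. by []. Qed.

Definition fu (j : nat) : CC := Complex (ux j) (uy j).
Definition fuc (j : nat) : CC := Complex (ux j) (- uy j).
Definition rr (k : nat) : CC := Complex (R_sqrt.sqrt (INR k + 1)) 0.

Lemma fu_inj : injective fu.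
Proof. by move=> x y [] /ux_inj. Qed.

Lemma fu_unit j : fu j * fuc j = 1.
Proof.
rewrite /fu /fuc cmul; have := moeb_unit j.
rewrite /= => h; congr Complex; rewrite ?mulrN ?opprK //.
by rewrite mulrC addNr.
Qed.

Lemma rr2 k : rr k ^+ 2 = k.+1%:R.
Proof.
have -> : rr k = (R_sqrt.sqrt (INR k + 1))%:C by [].
rewrite -rmorphXn -(rmorph_nat (real_complex RR)); congr real_complex_def.
rewrite expr2 -RmultE sqrt_sqrt.
  by rewrite INRE RplusE R1E natr1.
by apply: Rplus_le_le_0_compat; [apply: pos_INR | apply: Rle_0_1].
Qed.

Definition ac (A : nat -> point) (O : point) i : CC := Complex (fst (A i) - fst O) (snd (A i) - snd O).
Definition bc (A : nat -> point) (O : point) i : CC := Complex (fst (A i) - fst O) (- (snd (A i) - snd O)).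

Lemma term_eq (A : nat -> point) (O : point) (r : RR) j i :
  ((Complex r 0 * fu j - ac A O i) * (Complex r 0 * fuc j - bc A O i)) =
  ((fst (fst O + r * ux j, snd O + r * uy j) - fst (A i)) ^+ 2 +
   (snd (fst O + r * ux j, snd O + r * uy j) - snd (A i)) ^+ 2)%:C.
Proof.
rewrite /fu /fuc /ac /bc.
apply/eqP; rewrite eq_complex /=; apply/andP; split; apply/eqP; ring.
Qed.

Lemma sum_bridge (f : nat -> RR) n : \sum_(i < n) (f i)%:C = (sumR n f)%:C.
Proof.
elim: n => [|n IH]; first by rewrite big_ord0.
by rewrite big_ord_recr /= IH -rmorphD.
Qed.

Lemma Hc_bridge (n : nat) (A : nat -> point) (O : point) :
  (forall r : RR, Rlt 0 r ->
     exists c : RR, forall P : point, pdist P O = r ->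
       sumR n (fun i => pow (pdist P (A i)) (Nat.sub (Nat.mul 2 n) 2)) = c) ->
  forall k, exists K, forall j, L n n.-1 (ac A O) (bc A O) (rr k * fu j) (rr k * fuc j) = K.
Proof.
move=> hyp k.
have [c Hc] := hyp _ (sqrt_pos_k k).
exists c%:C => j.
have HP := Hc _ (@pdist_circle O _ _ _ (sqrt_pos_k k) (moeb_unit j)).
rewrite /L /rr.
rewrite -HP -sum_bridge; apply: eq_bigr => i _.
rewrite term_eq -rmorphXn; congr real_complex_def.
by rewrite pdist_pow !RpowE nsub1.
Qed.

Definition ce (p : RR) : CC := Complex (cos p) (sin p).

Lemma ce_add x y : ce (Rplus x y) = ce x * ce y.
Proof. by rewrite /ce cmul cos_plus sin_plus; congr Complex; rewrite addrC. Qed.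

Lemma ce_pow p k : ce p ^+ k = ce (Rmult (INR k) p).
Proof.
elim: k => [|k IH].
  by rewrite expr0 /ce Rmult_0_l cos_0 sin_0.
rewrite exprS IH -ce_add; congr ce.
rewrite S_INR !RmultE !RplusE R1E; ring.
Qed.

Lemma final (n : nat) (A : nat -> point) (O : point) :
  Peano.le 2 n ->
  (forall i j, Peano.lt i n -> Peano.lt j n -> i <> j -> A i <> A j) ->
  (forall r : RR, Rlt 0 r ->
     exists c : RR, forall P : point, pdist P O = r ->
       sumR n (fun i => pow (pdist P (A i)) (Nat.sub (Nat.mul 2 n) 2)) = c) ->
  is_regular_ngon_centred n A O.
Proof.
move=> /ssrnat.leP n2 hd hyp.
have n1 : (1 < n)%N := n2.
have n0 : (0 < n)%N by apply: ltn_trans n1.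
have ainj : forall i j, (i < n)%N -> (j < n)%N -> ac A O i = ac A O j -> i = j.
  move=> i j /ssrnat.ltP iN /ssrnat.ltP jN [e1 e2].
  case: (Nat.eq_dec i j) => // ne; exfalso.
  exact: (hd i j iN jN ne (pair_eq_diff (A i) (A j) O e1 e2)).
have [a0nz apow] := alg_main n1 ainj fu_inj fu_unit rr2 (Hc_bridge hyp).
set x := fst (A 0%N) - fst O; set y := snd (A 0%N) - snd O.
have nz : ~ (x = 0 /\ y = 0).
  by move=> [hx hy]; move: a0nz; rewrite /ac -/x -/y hx hy eqxx.
have [th [hx hy]] := @polar x y nz.
set rho := R_sqrt.sqrt (x * x + y * y) in hx hy.
pose w k : CC := Complex (rho * cos (th + phi n k)) (rho * sin (th + phi n k)).
have a0E : ac A O 0 = Complex (rho * cos th) (rho * sin th).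
  by rewrite /ac -/x -/y; congr Complex.
have wE : forall k, w k = ac A O 0 * ce (phi n k).
  by move=> k; rewrite a0E /ce cmul; congr Complex; [exact: rot_cos | exact: rot_sin].
have wpow : forall k, (k < n)%N -> w k ^+ n = ac A O 0 ^+ n.
  move=> k _; rewrite wE exprMn ce_pow.
  have [c1 s1] := @full_turn n k (elimT ssrnat.ltP n0).
  have -> : ce (Rmult (INR n) (phi n k)) = 1 by rewrite /ce c1 s1.
  by rewrite mulr1.
have winj : forall k l, (k < n)%N -> (l < n)%N -> w k = w l -> k = l.
  move=> k l kn ln; rewrite !wE => /(mulfI a0nz) [ec es].
  have [dc ds] := @diff_angle _ _ ec es.
  exact: (@angle_inj n k l (elimT ssrnat.ltP n0) (elimT ssrnat.ltP kn) (elimT ssrnat.ltP ln) dc ds).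
have hs := roots_cover n0 ainj apow wpow.
have [sigma [s1 [s2 s3]]] := sigma_exists winj hs.
exists rho, th, sigma; split; first exact: (@pos_sqrt_sum x y nz).
split; first by move=> k /ssrnat.ltP kn; apply/ssrnat.ltP; exact: s1.
split; first by move=> k l /ssrnat.ltP kn /ssrnat.ltP ln; exact: s2.
move=> k /ssrnat.ltP kn; have := s3 k kn; rewrite /ac /w => [[e1 e2]].
by rewrite /ngon_vertex; exact: (@pair_from_diff _ _ _ _ e1 e2).
Qed.

End Alg.

Theorem mainTheorem4 (n : nat) (A : nat -> point) (O : point) :
  (2 <= n)%nat ->
  (forall i j, (i < n)%nat -> (j < n)%nat -> i <> j -> A i <> A j) ->
  (forall r : R, 0 < r ->
     exists c : R, forall P : point, pdist P O = r ->
       sumR n (fun i => pdist P (A i) ^ (2 * n - 2)%nat) = c) ->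
  is_regular_ngon_centred n A O.
Proof.
  exact (@Alg.final n A O).
Qed.
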